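(* For every $N\ge 5$, \[ \rho(\mathrm{Cir}^4_N,\mathrm{Cir}^2_N)\le \frac{18}{53}, \] where $\mathrm{Cir}^4_N$ is the graph on vertices $1,\dots,N$ arranged in a cycle with each vertex adjacent to the 2 nearest vertices in each cyclic direction, and $\mathrm{Cir}^2_N$ is the cycle graph on the same vertices in the same cyclic order.
   Context: Moran Birth-death process on two graphs (neutral case): $G^A$ and $G^B$ are connected undirected simple graphs on the same vertex set $\{1,\dots,N\}$. Every vertex is occupied by exactly one individual, of type $A$ (mutant) or type $B$ (resident). In each discrete time step, one individual is chosen uniformly at random among all $N$ individuals to reproduce; its offspring (of the same type) replaces the individual at a vertex chosen uniformly at random among the neighbors of the parent's vertex, where neighbors are taken in $G^A$ if the parent is of type $A$ and in $G^B$ if the parent is of type $B$. The all-$A$ and all-$B$ states are absorbing. The fixation probability $\rho(G^A,G^B)$ is the probability that the process reaches the all-$A$ state when started from exactly one type-$A$ individual at a uniformly random vertex, all other vertices of type $B$. *)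

(* Defs.v *)
From HB Require Import structures.
From mathcomp Require Import all_boot all_order all_algebra.
From mathcomp Require Import all_classical all_reals all_analysis.
From mathcomp Require Import Rstruct Rstruct_topology.
Set Implicit Arguments. Unset Strict Implicit. Unset Printing Implicit Defensive.
Import Order.TTheory GRing.Theory Num.Theory.
Local Open Scope ring_scope.

(* Graphs on vertex set 'I_N (vertex k stands for the paper's vertex k+1),
   given as adjacency relations (symmetric, irreflexive). *)

Definition cdist (N : nat) (i j : 'I_N) : nat :=
  minn ((j + N - i) %% N)%N ((i + N - j) %% N)%N.

Definition circ (d N : nat) : rel 'I_N :=
  fun i j => (i != j) && (cdist i j <= d)%N.

Definition CirN4 (N : nat) : rel 'I_N := @circ 2 N.
Definition CirN2 (N : nat) : rel 'I_N := @circ 1 N.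

Definition nbr (N : nat) (G : rel 'I_N) (u : 'I_N) : {set 'I_N} :=
  [set v | G u v].

(* A state is the set S of vertices occupied by type A (mutants).
   Birth-death step: reproducer u chosen uniformly (prob 1/N); its offspring
   replaces a uniformly chosen neighbour v of u, neighbours taken in GA if
   u is of type A (u \in S) and in GB otherwise. *)
Definition step (N : nat) (S : {set 'I_N}) (u v : 'I_N) : {set 'I_N} :=
  if u \in S then v |: S else S :\ v.

Definition graph_of (N : nat) (GA GB : rel 'I_N) (S : {set 'I_N}) (u : 'I_N)
  : rel 'I_N := if u \in S then GA else GB.

(* hit N GA GB n S = probability that the process started at state S
   reaches the all-A state within n steps. *)
Fixpoint hit (N : nat) (GA GB : rel 'I_N) (n : nat) (S : {set 'I_N}) : Rdefinitions.R :=
  match n with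
  | 0%N => if S == [set: 'I_N] then 1 else 0
  | n'.+1 =>
    if S == [set: 'I_N] then 1 else
    \sum_(u : 'I_N)
      \sum_(v in nbr (graph_of GA GB S u) u)
        (N%:R^-1 * (#|nbr (graph_of GA GB S u) u|%:R)^-1)
          * hit GA GB n' (step S u v)
  end.

Definition fixprob (N : nat) (GA GB : rel 'I_N) : Rdefinitions.R :=
  limn (fun n => N%:R^-1 * \sum_(v : 'I_N) hit GA GB n [set v]).

(* Main.v *)
Require Import Defs.
From HB Require Import structures.
From mathcomp Require Import all_boot all_order all_algebra.
From mathcomp Require Import all_classical all_reals all_analysis.
From mathcomp Require Import Rstruct Rstruct_topology.
From mathcomp Require Import ring lra zify.
Import Order.TTheory GRing.Theory Num.Theory.
Local Open Scope ring_scope.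
Section S.
Variable n : nat.
Local Notation N := n.+4.+1.
Local Notation T := 'I_N.

Lemma val1 : val (1 : T) = 1%N. Proof. by []. Qed.
Lemma valN (x : T) : val (- x) = ((N - x) %% N)%N. Proof. by []. Qed.
Lemma valB (x y : T) : val (x - y) = ((x + N - y) %% N)%N.
Proof. by rewrite /= modnDmr addnBA // ltnW. Qed.
Lemma valk (k : nat) : (k < N)%N -> val (k%:R : T) = k.
Proof. move=> h. by rewrite Zp_nat /= modn_small. Qed.

Lemma cdistE (i j : T) : cdist i j = minn (val (j - i)) (val (- (j - i))).
Proof. by rewrite /cdist opprB !valB. Qed.

Lemma eq_sub (i j x : T) : (j == i + x) = (j - i == x).
Proof. by rewrite subr_eq addrC. Qed.

Lemma circE (d : nat) (i j : T) : circ d i j =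
   (val (j - i)%R != 0%N) && (minn (val (j - i)%R) ((N - val (j - i)%R) %% N) <= d)%N.
Proof.
rewrite /circ cdistE valN; congr (_ && _).
have -> : (val (j - i)%R != 0%N) = (j - i != 0) by [].
by rewrite subr_eq0 eq_sym.
Qed.

Lemma circ1 (k : T) : (val k != 0%N) && (minn (val k) ((N - val k) %% N) <= 1)%N = (k == 1) || (k == -1).
Proof.
rewrite -!val_eqE /=.
move: (ltn_ord k); case: (nat_of_ord k) => [|m] hm /=;
 (rewrite !modn_small; try lia); apply/idP/idP; lia.
Qed.
Lemma circ2 (k : T) : (val k != 0%N) && (minn (val k) ((N - val k) %% N) <= 2)%N =
  [|| k == 1, k == -1, k == 2 | k == -2].
Proof.
rewrite -!val_eqE /=.
move: (ltn_ord k); case: (nat_of_ord k) => [|m] hm /=;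
 (rewrite !modn_small; try lia); apply/idP/idP; lia.
Qed.


Lemma neqk (x y : T) (k : nat) : (0 < k < N)%N -> x - y = k%:R -> x != y.
Proof.
move=> hk e; apply/eqP => exy; move: e; rewrite exy subrr => /(congr1 val).
rewrite valk /=; lia.
Qed.

Ltac neq1 k := solve [ apply: (@neqk _ _ k); [done | ring] | rewrite eq_sym; apply: (@neqk _ _ k); [done | ring] ].
Ltac neq := first [ neq1 1%N | neq1 2%N | neq1 3%N | neq1 4%N ].

Lemma addK_eq (u c x : T) : u + c = x -> u = x - c.
Proof. by move=> <-; rewrite addrK. Qed.
Arguments addK_eq {u c x}.

Ltac contra_eq :=
  match goal with
  | U : ?u = ?t, h : is_true (?u != ?e) |- False =>
      move/negP: h; apply; apply/eqP; rewrite U; ring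
  end.

Ltac notinS :=
  rewrite ?inE; apply/negP; let H := fresh in move=> H;
  repeat (case/orP: H => H); move/eqP: H => H;
  first [ let U := fresh in have U := addK_eq H; contra_eq
        | contra_eq ].


Local Notation R := Rdefinitions.R.
Definition c1 : R := 18%:R / 53%:R.
Definition c2a : R := 39%:R / 53%:R.
Definition c2g : R := 33%:R / 53%:R.

Definition fS (S : {set T}) : R :=
  if (3 <= #|S|)%N then 1 else if #|S| == 0%N then 0 else if #|S| == 1%N then c1
  else if [exists b, S == [set b; b + 1]] then c2a
  else if [exists b, S == [set b; b + 2]] then c2g else 1.

Lemma fS_ge0 S : 0 <= fS S.
Proof. rewrite /fS /c1 /c2a /c2g; repeat case: ifP => _; lra. Qed.
Lemma fS_le1 S : fS S <= 1.
Proof. rewrite /fS /c1 /c2a /c2g; repeat case: ifP => _; lra. Qed.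

Lemma card3 (x y z : T) : x != y -> x != z -> y != z -> #|x |: [set y; z]| = 3%N.
Proof.
move=> h1 h2 h3; rewrite cardsU1 cards2 h3 !inE negb_or h1 h2 //.
Qed.

Lemma fS3 (x y z : T) : x != y -> x != z -> y != z -> fS (x |: [set y; z]) = 1.
Proof. by move=> h1 h2 h3; rewrite /fS card3. Qed.
Ltac fS3t := rewrite fS3; [| neq | neq | neq].

Lemma fS0 : fS (finset.set0 : {set T}) = 0. Proof. by rewrite /fS cards0. Qed.
Lemma fS1 a : fS [set a] = c1. Proof. by rewrite /fS cards1. Qed.

Lemma fS_adj a : fS [set a; a + 1] = c2a.
Proof.
rewrite /fS cards2 (_ : a != a + 1) /=; last neq.
by have -> : [exists b, [set a; a + 1] == [set b; b + 1]] by apply/existsP; exists a.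
Qed.

Lemma fS_gap a : fS [set a; a + 2] = c2g.
Proof.
rewrite /fS cards2 (_ : a != a + 2) /=; last neq.
have -> : [exists b, [set a; a + 2] == [set b; b + 2]] by apply/existsP; exists a.
case: existsP => // [[b /eqP E]].
have ha : a \in [set b; b + 1] by rewrite -E !inE eqxx.
have hb : a + 2 \in [set b; b + 1] by rewrite -E !inE eqxx orbT.
move: ha hb; rewrite !inE => /orP[] /eqP -> /orP[] /eqP h; exfalso; move: h; apply/eqP; neq.
Qed.

Lemma fS_adjR a : fS [set a + 1; a] = c2a. Proof. by rewrite finset.setUC fS_adj. Qed.
Lemma fS_adjL a : fS [set a - 1; a] = c2a. Proof. by have := fS_adj (a - 1); rewrite subrK. Qed.
Lemma fS_gapR a : fS [set a + 2; a] = c2g. Proof. by rewrite finset.setUC fS_gap. Qed.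
Lemma fS_gapL a : fS [set a - 2; a] = c2g. Proof. by have := fS_gap (a - 2); rewrite subrK. Qed.

Lemma nbr2 u : nbr (@CirN2 N) u = [set u + 1; u - 1].
Proof. by apply/finset.setP => v; rewrite !inE /CirN2 circE circ1 !eq_sub. Qed.
Lemma nbr4 u : nbr (@CirN4 N) u = [set u + 1; u - 1; u + 2; u - 2].
Proof. by apply/finset.setP => v; rewrite !inE /CirN4 circE circ2 !eq_sub !orbA. Qed.

Ltac notinK := rewrite ?inE; apply/negP;
 repeat (let H := fresh in move=> H; repeat (case/orP: H => H); move/eqP: H; apply/eqP; neq).
Lemma sum2 (F : T -> R) u : \sum_(v in [set u + 1; u - 1]) F v = F (u + 1) + F (u - 1).
Proof. by rewrite big_setU1 ?big_set1 //; notinK. Qed.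
Lemma set4E (a b c d : T) : [set a; b; c; d] = a |: (b |: (c |: [set d])).
Proof. by rewrite !finset.setUA. Qed.
Lemma sum4 (F : T -> R) u : \sum_(v in [set u + 1; u - 1; u + 2; u - 2]) F v =
   F (u + 1) + F (u - 1) + F (u + 2) + F (u - 2).
Proof.
rewrite set4E big_setU1 ?big_setU1 ?big_setU1 ?big_set1 //; first by rewrite /= !addrA.
all: notinK.
Qed.
Lemma card_nbr2 (u : T) : #|[set u + 1; u - 1]| = 2%N.
Proof. by rewrite cards2 (_ : u + 1 != u - 1) //; neq. Qed.
Lemma card_nbr4 (u : T) : #|[set u + 1; u - 1; u + 2; u - 2]| = 4%N.
Proof.
rewrite set4E !cardsU1 cards1 !inE.
have h1 : u + 1 != u - 1 by neq. have h2 : u + 1 != u + 2 by neq.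
have h3 : u + 1 != u - 2 by neq. have h4 : u - 1 != u + 2 by neq.
have h5 : u - 1 != u - 2 by neq. have h6 : u + 2 != u - 2 by neq.
by rewrite (negbTE h1) (negbTE h2) (negbTE h3) (negbTE h4) (negbTE h5) (negbTE h6).
Qed.

Local Notation G4 := (@CirN4 N).
Local Notation G2 := (@CirN2 N).
Local Notation NR := (N%:R : R).

Definition gA (S : {set T}) v := fS (v |: S) - fS S.
Definition gB (S : {set T}) v := fS (S :\ v) - fS S.
Definition Dexp (S : {set T}) (u : T) : R :=
  if u \in S then NR^-1 * 4^-1 * (gA S (u + 1) + gA S (u - 1) + gA S (u + 2) + gA S (u - 2))
  else NR^-1 * 2^-1 * (gB S (u + 1) + gB S (u - 1)).
Definition A (S : {set T}) (u : T) : R :=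
  \sum_(v in nbr (graph_of G4 G2 S u) u)
     (NR^-1 * (#|nbr (graph_of G4 G2 S u) u|%:R)^-1) * fS (step S u v).

Lemma NR_neq0 : NR != 0. Proof. by rewrite pnatr_eq0. Qed.

Lemma hN5 : 5 + n%:R != 0 :> R.
Proof. have h0 : (0 : R) <= n%:R := ler0n _ _. apply: lt0r_neq0; lra. Qed.

Lemma A_eq S u : A S u = NR^-1 * fS S + Dexp S u.
Proof.
have := NR_neq0 => hN.
rewrite /A /Dexp /graph_of /step; case: ifP => hu.
  rewrite nbr4 card_nbr4 sum4 /gA; field; exact: hN5.
rewrite nbr2 card_nbr2 sum2 /gB; field; exact: hN5.
Qed.

Lemma E_eq S : \sum_u A S u = fS S + \sum_u Dexp S u.
Proof.
under eq_bigr do rewrite A_eq.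
rewrite big_split /= sumr_const card_ord -mulr_natr; congr (_ + _).
field; exact: hN5.
Qed.

Lemma Dexp_le0 S u : fS S = 1 -> Dexp S u <= 0.
Proof.
move=> h; rewrite /Dexp /gA /gB h.
have h0 : 0 <= NR^-1 by rewrite invr_ge0 ler0n.
have := fS_le1 (u + 1 |: S); have := fS_le1 (u - 1 |: S);
have := fS_le1 (u + 2 |: S); have := fS_le1 (u - 2 |: S);
have := fS_le1 (S :\ (u + 1)); have := fS_le1 (S :\ (u - 1)).
case: ifP => _ *; rewrite -mulrA; apply: mulr_ge0_le0 => //; lra.
Qed.

Lemma setU1_in (S : {set T}) v : v \in S -> v |: S = S.
Proof. by move=> h; apply/finset.setP => x; rewrite !inE; case: eqP => // ->. Qed.
Lemma setD1_out (S : {set T}) v : v \notin S -> S :\ v = S.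
Proof. by move=> h; apply/finset.setP => x; rewrite !inE; case: eqP => // ->; rewrite (negbTE h). Qed.

Lemma gA_in (S : {set T}) v : v \in S -> gA S v = 0.
Proof. by move=> h; rewrite /gA setU1_in // subrr. Qed.
Lemma gB_out (S : {set T}) v : v \notin S -> gB S v = 0.
Proof. by move=> h; rewrite /gB setD1_out // subrr. Qed.
Lemma gA3 (a b v : T) : v != a -> v != b -> a != b -> gA [set a; b] v = 1 - fS [set a; b].
Proof. by move=> h1 h2 h3; rewrite /gA fS3. Qed.
Lemma gB_l (a b : T) : a != b -> gB [set a; b] a = fS [set b] - fS [set a; b].
Proof.
move=> h; rewrite /gB; congr (fS _ - _); apply/finset.setP => x; rewrite !inE.
by have [->|hx] := eqVneq x a; rewrite /= ?(negbTE h).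
Qed.
Lemma gB_r (a b : T) : a != b -> gB [set a; b] b = fS [set a] - fS [set a; b].
Proof.
move=> h; rewrite /gB; congr (fS _ - _); apply/finset.setP => x; rewrite !inE.
by have [->|hx] := eqVneq x b; rewrite /= ?orbF // eq_sym (negbTE h).
Qed.
Lemma gB_1 (a : T) : gB [set a] a = 0 - fS [set a].
Proof. by rewrite /gB finset.setDv fS0. Qed.

Ltac memt := rewrite ?inE ?eqxx ?orbT //.

Lemma sumD1 (a : T) : \sum_u Dexp [set a] u <= 0.
Proof.
rewrite (bigD1 a) // (bigD1 (a + 1)) //; last by neq.
rewrite (bigD1 (a - 1)); last by rewrite /= andbC; apply/andP; split; neq.
rewrite big1; last first.
  move=> u /andP[/andP[/andP[_ h1] h2] h3].
  have hu : u \notin [set a] by notinS.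
  rewrite /Dexp (negbTE hu) !gB_out; [ | notinS | notinS].
  by rewrite addr0 mulr0.
have Da : Dexp [set a] a = NR^-1 * 4^-1 * (c2a - c1 + (c2a - c1) + (c2g - c1) + (c2g - c1)).
  by rewrite /Dexp set11 /gA fS1 fS_adjR fS_adjL fS_gapR fS_gapL.
have Db : Dexp [set a] (a + 1) = NR^-1 * 2^-1 * (0 + (0 - c1)).
  have h : a + 1 \notin [set a] by notinK.
  by rewrite /Dexp (negbTE h) addrK gB_1 fS1 gB_out //; notinK.
have Dc : Dexp [set a] (a - 1) = NR^-1 * 2^-1 * ((0 - c1) + 0).
  have h : a - 1 \notin [set a] by notinK.
  by rewrite /Dexp (negbTE h) subrK gB_1 fS1 (@gB_out _ (a - 1 - 1)) //; notinK.
rewrite Da Db Dc /c1 /c2a /c2g /=.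
set x := NR^-1; lra.
Qed.

Ltac sidet := rewrite /=; repeat (apply/andP; split); neq.

Lemma sumD2 (a : T) : \sum_u Dexp [set a; a + 1] u <= 0.
Proof.
set S := [set a; a + 1].
rewrite (bigD1 a) // (bigD1 (a + 1)) //; last by sidet.
rewrite (bigD1 (a - 1)); last by sidet.
rewrite (bigD1 (a + 2)); last by sidet.
rewrite big1; last first.
  move=> u /andP[/andP[/andP[/andP[_ h1] h2] h3] h4].
  have hu : u \notin S by notinS.
  rewrite /Dexp (negbTE hu) !gB_out; [ | notinS | notinS].
  by rewrite addr0 mulr0.
have ha : a \in S by memt.
have hb : a + 1 \in S by memt.
have hc : a - 1 \notin S by notinK.
have hd : a + 2 \notin S by notinK.
have Da : Dexp S a = NR^-1 * 4^-1 * (0 + (1 - c2a) + (1 - c2a) + (1 - c2a)).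
  rewrite /Dexp ha gA_in; last memt.
  by rewrite !gA3 ?fS_adj; try neq.
have Db : Dexp S (a + 1) = NR^-1 * 4^-1 * ((1 - c2a) + 0 + (1 - c2a) + (1 - c2a)).
  rewrite /Dexp hb addrK (@gA_in _ (a)); last memt.
  by rewrite !gA3 ?fS_adj; try neq.
have Dc : Dexp S (a - 1) = NR^-1 * 2^-1 * ((c1 - c2a) + 0).
  rewrite /Dexp (negbTE hc) subrK gB_l ?fS1 ?fS_adj; last neq.
  by rewrite gB_out //; notinK.
have Dd : Dexp S (a + 2) = NR^-1 * 2^-1 * (0 + (c1 - c2a)).
  rewrite /Dexp (negbTE hd) (_ : a + 2 - 1 = a + 1); last ring.
  rewrite gB_r ?fS1 ?fS_adj; last neq.
  by rewrite gB_out //; notinK.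
rewrite Da Db Dc Dd /c1 /c2a /c2g /=.
set x := NR^-1; lra.
Qed.

Lemma sumD3 (a : T) : \sum_u Dexp [set a; a + 2] u <= 0.
Proof.
set S := [set a; a + 2].
rewrite (bigD1 a) // (bigD1 (a + 2)) //; last by sidet.
rewrite (bigD1 (a + 1)); last by sidet.
rewrite (bigD1 (a - 1)); last by sidet.
rewrite (bigD1 (a + 3)); last by sidet.
rewrite big1; last first.
  move=> u /andP[/andP[/andP[/andP[/andP[_ h1] h2] h3] h4] h5].
  have hu : u \notin S by notinS.
  rewrite /Dexp (negbTE hu) !gB_out; [ | notinS | notinS].
  by rewrite addr0 mulr0.
have ha : a \in S by memt.
have hb : a + 2 \in S by memt.
have hc : a + 1 \notin S by notinK.
have hd : a - 1 \notin S by notinK.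
have he : a + 3 \notin S by notinK.
have Da : Dexp S a = NR^-1 * 4^-1 * ((1 - c2g) + (1 - c2g) + 0 + (1 - c2g)).
  rewrite /Dexp ha (@gA_in _ (a + 2)); last memt.
  by rewrite !gA3 ?fS_gap; try neq.
have Db : Dexp S (a + 2) = NR^-1 * 4^-1 * ((1 - c2g) + (1 - c2g) + (1 - c2g) + 0).
  rewrite /Dexp hb addrK (@gA_in _ (a)); last memt.
  by rewrite !gA3 ?fS_gap; try neq.
have Dc : Dexp S (a + 1) = NR^-1 * 2^-1 * ((c1 - c2g) + (c1 - c2g)).
  rewrite /Dexp (negbTE hc) addrK (_ : a + 1 + 1 = a + 2); last ring.
  by rewrite gB_l ?gB_r ?fS1 ?fS_gap; try neq.
have Dd : Dexp S (a - 1) = NR^-1 * 2^-1 * ((c1 - c2g) + 0).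
  rewrite /Dexp (negbTE hd) subrK gB_l ?fS1 ?fS_gap; last neq.
  by rewrite gB_out //; notinK.
have De : Dexp S (a + 3) = NR^-1 * 2^-1 * (0 + (c1 - c2g)).
  rewrite /Dexp (negbTE he) (_ : a + 3 - 1 = a + 2); last ring.
  rewrite gB_r ?fS1 ?fS_gap; last neq.
  by rewrite gB_out //; notinK.
rewrite Da Db Dc Dd De /c1 /c2a /c2g /=.
set x := NR^-1; lra.
Qed.

Lemma sumD (S : {set T}) : \sum_u Dexp S u <= 0.
Proof.
case h1: (fS S == 1).
  by apply: sumr_le0 => u _; apply: Dexp_le0; apply/eqP.
move: h1; rewrite {1}/fS.
case: ifP => [_|h3]; first by rewrite eqxx.
case: ifP => [/eqP/cards0_eq -> _| h0].
  apply: sumr_le0 => u _; rewrite /Dexp inE /= !gB_out ?inE //.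
case: ifP => [/cards1P [a ->] _ | _]; first exact: sumD1.
case: ifP => [/existsP [a /eqP ->] _ | _]; first exact: sumD2.
case: ifP => [/existsP [a /eqP ->] _ | _]; first exact: sumD3.
by rewrite eqxx.
Qed.

Lemma fST : fS [set: T] = 1.
Proof. by rewrite /fS cardsT card_ord. Qed.

Lemma hit0 (S : {set T}) : hit G4 G2 0 S = if S == [set: T] then 1 else 0.
Proof. by []. Qed.
Lemma hitS k (S : {set T}) : hit G4 G2 k.+1 S =
  if S == [set: T] then 1 else
    \sum_(u : T) \sum_(v in nbr (graph_of G4 G2 S u) u)
      (NR^-1 * (#|nbr (graph_of G4 G2 S u) u|%:R)^-1) * hit G4 G2 k (step S u v).
Proof. by []. Qed.

Lemma wt_ge0 (S : {set T}) u : 0 <= NR^-1 * (#|nbr (graph_of G4 G2 S u) u|%:R)^-1.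
Proof. by apply: mulr_ge0; rewrite invr_ge0 ler0n. Qed.

Lemma hit_ge0 k (S : {set T}) : 0 <= hit G4 G2 k S.
Proof.
elim: k S => [|k IH] S; first by rewrite hit0; case: ifP.
rewrite hitS; case: ifP => // _.
apply: sumr_ge0 => u _; apply: sumr_ge0 => v _; apply: mulr_ge0 => //; exact: wt_ge0.
Qed.

Lemma hit_le k (S : {set T}) : hit G4 G2 k S <= fS S.
Proof.
elim: k S => [|k IH] S.
  rewrite hit0; case: ifP => [/eqP ->|_]; [by rewrite fST | exact: fS_ge0].
rewrite hitS; case: ifP => [/eqP ->|_]; first by rewrite fST.
apply: (@le_trans _ _ (\sum_u A S u)).
  apply: ler_sum => u _; apply: ler_sum => v _; apply: ler_wpM2l; [exact: wt_ge0 | exact: IH].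
rewrite E_eq; have := sumD S; lra.
Qed.

Lemma hit_mono k (S : {set T}) : hit G4 G2 k S <= hit G4 G2 k.+1 S.
Proof.
elim: k S => [|k IH] S.
  rewrite hitS hit0; case: ifP => // _.
  apply: sumr_ge0 => u _; apply: sumr_ge0 => v _; apply: mulr_ge0; [exact: wt_ge0 | exact: hit_ge0].
rewrite (hitS k.+1) hitS; case: ifP => // _.
apply: ler_sum => u _; apply: ler_sum => v _; apply: ler_wpM2l; [exact: wt_ge0 | exact: IH].
Qed.

Lemma main5 : fixprob G4 G2 <= 18%:R / 53%:R.
Proof.
set u := fun k => NR^-1 * \sum_(v : T) hit G4 G2 k [set v].
have ub k : u k <= c1.
  rewrite /u; apply: (@le_trans _ _ (NR^-1 * \sum_(v : T) c1)).
    apply: ler_wpM2l; first by rewrite invr_ge0 ler0n.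
    by apply: ler_sum => v _; rewrite -(fS1 v); exact: hit_le.
  rewrite sumr_const (_ : #|xpredT| = N); last exact: card_ord. have -> : NR^-1 * (c1 *+ N) = c1 by rewrite -mulr_natr; field; exact: hN5. by [].
have mono : {homo u : i j / (i <= j)%N >-> i <= j}.
  apply/nondecreasing_seqP => k; rewrite /u; apply: ler_wpM2l; first by rewrite invr_ge0 ler0n.
  by apply: ler_sum => v _; exact: hit_mono.
have cv : cvgn u.
  apply: nondecreasing_is_cvgn => //; exists c1 => _ [k _ <-]; exact: ub.
rewrite /fixprob -/u; apply: limr_le => //; apply: nearW => k; exact: ub.
Qed.
End S.

Theorem mainTheorem5 (N : nat) (hN : (5 <= N)%N) :
  fixprob (@CirN4 N) (@CirN2 N) <= 18%:R / 53%:R.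
Proof.
case: N hN => [|[|[|[|[|n]]]]] // _.
exact: main5.
Qed.
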